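(* Let $p=\sum_{i=0}^n c_iT^i$ be a polynomial of degree $n\ge1$ over $\mathbb T$, and let $a_1\le\dots\le a_n$ be the unique elements of $\mathbb T$ with $c_n^{-1}p\in\boxdot_{i=1}^n(T+a_i)$. Let $a\ne0$ be one of the $a_i$, and let $k\in\{1,\dots,n\}$ and $m\ge1$ be such that $a=a_k=\dots=a_{k+m-1}$, $a_{k-1}<a_k$ if $k\ge2$, and $a_{k+m-1}<a_{k+m}$ if $k+m\le n$. Define $d_0,\dots,d_{n-1}\in\mathbb T$ by: (1) if $k\le n-m$: $d_{n-1}=c_n$ and, for $i=n-2,n-3,\dots,k+m-1$ (in decreasing order), $d_i=\max\{c_{i+1},ad_{i+1}\}$; (2) if $k\ge2$: $d_0=a^{-1}c_0$ and, for $i=1,\dots,k-2$ (in increasing order), $d_i=\max\{a^{-1}c_i,a^{-1}d_{i-1}\}$; (3) for $i=k-1,\dots,k+m-2$: $d_i=a_{i+2}a_{i+3}\cdots a_nc_n$ (an empty product being $1$). Then $q=\sum_{i=0}^{n-1}d_iT^i$ satisfies $p\in(T+a)\boxdot q$, i.e. $c_n=d_{n-1}$, $c_0=ad_0$, and $c_i\in (ad_i)\boxplus d_{i-1}$ for $i=1,\dots,n-1$.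
   Context: The tropical hyperfield $\mathbb T$ is $\mathbb R_{\ge0}$ with usual multiplication and hyperaddition $a\boxplus b=\{\max\{a,b\}\}$ if $a\ne b$, $a\boxplus a=[0,a]$ (so $c\in a\boxplus b$ iff the maximum of $a,b,c$ is attained at least twice; $-a=a$). Iterated sums: $\boxplus_{i=1}^n a_i=\bigcup_{b\in\boxplus_{i=1}^{n-1}a_i} b\boxplus a_n$. A polynomial over $\mathbb T$ is a finitely supported sequence $(c_i)$, written $\sum c_iT^i$. Hyperproduct: $p\boxdot q=\{\sum e_iT^i : e_i\in \boxplus_{k+l=i} c_kd_l\}$, and $\boxdot_{i=1}^n q_i=\bigcup_{r\in\boxdot_{i=1}^{n-1}q_i} r\boxdot q_n$. Known fact (fundamental theorem for $\mathbb T$): for monic $p$ of degree $n$ there is a unique sequence $a_1\le\dots\le a_n$ in $\mathbb T$ with $p\in\boxdot_{i=1}^n(T+a_i)$; this holds iff $c_i\le a_{i+1}\cdots a_n$ for all $i=0,\dots,n-1$ with equality whenever $a_i<a_{i+1}$ (for $i\ge1$) or $i=0$ and $a_0$ is not defined—precisely: $c_0=a_1\cdots a_n$ and $c_i=a_{i+1}\cdots a_n$ when $a_i<a_{i+1}$; the roots of $p$ are exactly $a_1,\dots,a_n$. *)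

(* Defs.v *)
(* The tropical hyperfield T is modelled as the nonnegative
   elements of an arbitrary real field R (the paper uses R_{>=0}). *)
From HB Require Import structures.
From mathcomp Require Import all_boot all_order all_algebra.
Set Implicit Arguments. Unset Strict Implicit. Unset Printing Implicit Defensive.
Import Order.TTheory GRing.Theory Num.Theory.
Local Open Scope ring_scope.

Section Tropical.
Variable R : realFieldType.

Definition hadd (a b c : R) : Prop :=
  if a != b then c = Num.max a b else 0 <= c <= a.

(* membership in the iterated hypersum [+]_{i=1}^n l_i, defined by
   [+]_{i=1}^n = U_{b in [+]_{i=1}^{n-1}} b [+] l_n ; the empty sum is {0}. *)
Fixpoint hsum_rev (l : seq R) (c : R) : Prop :=
  match l with
  | [::] => c = 0
  | x :: l' => exists b, hsum_rev l' b /\ hadd b x c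
  end.
Definition hsum (l : seq R) (c : R) : Prop := hsum_rev (rev l) c.

(* polynomials over T: coefficient sequences (finitely supported ones) *)
Definition tpoly := nat -> R.

Definition pmul (p q r : tpoly) : Prop :=
  forall i, hsum [seq p k * q (i - k)%N | k <- iota 0 i.+1] (r i).

Definition tpoly1 : tpoly := fun i => if i == 0%N then 1 else 0.

Fixpoint hprod_rev (l : seq tpoly) (r : tpoly) : Prop :=
  match l with
  | [::] => r = tpoly1
  | q :: l' => exists s, hprod_rev l' s /\ pmul s q r
  end.
Definition hprod (l : seq tpoly) (r : tpoly) : Prop := hprod_rev (rev l) r.

Definition linT (a : R) : tpoly :=
  fun i => if i == 0%N then a else if i == 1%N then 1 else 0.

End Tropical.

(* Main.v *)
Require Import Defs.
From HB Require Import structures.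
From mathcomp Require Import all_boot all_order all_algebra.
From mathcomp Require Import lra zify.
Import Order.TTheory GRing.Theory Num.Theory.
Set Implicit Arguments. Unset Strict Implicit. Unset Printing Implicit Defensive.
Local Open Scope ring_scope.

Section Aux.
Variable R : realFieldType.
Implicit Types x y c : R.

Lemma hadd_ge0 x y c : 0 <= x -> 0 <= y -> hadd x y c -> 0 <= c.
Proof.
rewrite /hadd => hx hy; case: ifP => _; last by case/andP.
by move=> ->; rewrite le_max hx.
Qed.

Lemma hadd_le x y c : hadd x y c -> c <= Num.max x y.
Proof.
rewrite /hadd; case: ifP => [_ ->//|/negbFE/eqP <- /andP[_]].
by rewrite maxxx.
Qed.

Lemma hadd_lt x y c : x < y -> hadd x y c -> c = y.
Proof.
rewrite /hadd lt_neqAle => /andP[-> le] ->; exact: max_r.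
Qed.

Lemma hadd00 c : hadd 0 0 c -> c = 0.
Proof. by rewrite /hadd eqxx /= => H; apply/eqP; rewrite eq_le andbC. Qed.

Lemma hadd_same x c : 0 <= c <= x -> hadd x x c.
Proof. by rewrite /hadd eqxx. Qed.

Lemma hadd_eqr x c : 0 <= c -> x <= c -> hadd x c c.
Proof.
move=> h0 h; rewrite /hadd; case: ifP => [_|/negbFE/eqP ->]; first by rewrite max_r.
by rewrite h0 lexx.
Qed.

Lemma hadd_eql y c : 0 <= c -> y <= c -> hadd c y c.
Proof.
move=> h0 h; rewrite /hadd; case: ifP => [_|_]; first by rewrite max_l.
by rewrite h0 lexx.
Qed.

Lemma hadd_maxr x c : 0 <= c -> hadd x (Num.max c x) c.
Proof.
move=> h0; case: (leP c x) => h.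
  by apply: hadd_same; rewrite h0.
by apply: hadd_eqr => //; rewrite ltW.
Qed.

Lemma hadd_maxl y c : 0 <= c -> hadd (Num.max c y) y c.
Proof.
move=> h0; case: (leP c y) => h.
  by apply: hadd_same; rewrite h0.
by apply: hadd_eql => //; rewrite ltW.
Qed.

Lemma hadd0x x c : 0 <= x -> (hadd 0 x c <-> c = x).
Proof.
move=> hx; rewrite /hadd; case: eqP => [<-|nx] /=.
  by split => [H|->]; [apply/eqP; rewrite eq_le andbC | rewrite lexx].
by rewrite max_r.
Qed.

Lemma hsum_rev_ge0 l c : all (fun x => 0 <= x) l -> hsum_rev l c -> 0 <= c.
Proof.
elim: l c => [c _ /= ->//|x l IH c /= /andP[hx hl] [b [hb hc]]].
exact: (hadd_ge0 (IH _ hl hb) hx hc).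
Qed.

Lemma hsum_rev_zeros j c : hsum_rev (nseq j (0:R)) c <-> c = 0.
Proof.
elim: j c => [//|j IH] c /=; split.
  by move=> [b [/IH -> /hadd00]].
by move=> ->; exists 0; split; [apply/IH | apply: hadd_same; rewrite lexx].
Qed.

Lemma hsum_rev_catz l j c : hsum_rev (l ++ nseq j 0) c <-> hsum_rev l c.
Proof.
elim: l c => [|x l IH] c /=; first exact: hsum_rev_zeros.
by split => -[b [hb hc]]; exists b; split => //; apply/IH.
Qed.

Lemma hsum_rev_z0 l c : all (fun x => 0 <= x) l ->
  (hsum_rev (0 :: l) c <-> hsum_rev l c).
Proof.
move=> hl /=; split.
  move=> [b [hb hc]]; have b0 := hsum_rev_ge0 hl hb.
  move: hc; rewrite /hadd; case: ifP => [_ ->|/negbFE/eqP e].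
    by rewrite max_l.
  by move: hb; rewrite e => hb /andP[h1 h2]; have -> : c = 0 by apply/eqP; rewrite eq_le h1 h2.
move=> hc; exists c; split => //; have c0 := hsum_rev_ge0 hl hc.
by apply: hadd_eql.
Qed.

Lemma hsum_rev_zl l j c : all (fun x => 0 <= x) l ->
  (hsum_rev (nseq j 0 ++ l) c <-> hsum_rev l c).
Proof.
move=> hl; elim: j c => [//|j IH] c /=.
rewrite -/(hsum_rev (0 :: (nseq j 0 ++ l)) c) hsum_rev_z0 ?IH //.
by rewrite all_cat hl andbT; apply/allP => x /nseqP [-> _].
Qed.

Lemma hsum_zl l j c : hsum (nseq j 0 ++ l) c <-> hsum l c.
Proof. by rewrite /hsum rev_cat rev_nseq hsum_rev_catz. Qed.

Lemma hsum_zr l j c : all (fun x => 0 <= x) l -> (hsum (l ++ nseq j 0) c <-> hsum l c).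
Proof. by move=> hl; rewrite /hsum rev_cat rev_nseq hsum_rev_zl // all_rev. Qed.

Lemma hsum1 x c : 0 <= x -> (hsum [:: x] c <-> c = x).
Proof.
move=> hx; rewrite /hsum /=; split.
  by move=> [b [-> /hadd0x]] => /(_ hx).
by move=> ->; exists 0; split => //; apply/hadd0x.
Qed.

Lemma hsum2 x y c : 0 <= x -> (hsum [:: x; y] c <-> hadd x y c).
Proof.
move=> hx; rewrite /hsum /=; split.
  by move=> [b [[b0 [-> /(hadd0x _ hx) ->]] H]].
by move=> H; exists x; split => //; exists 0; split => //; apply/hadd0x.
Qed.

Lemma map_zero (f : nat -> R) (s : seq nat) : (forall t, t \in s -> f t = 0) -> map f s = nseq (size s) 0.
Proof.
elim: s => [//|t s IH] H /=; rewrite H ?mem_head // IH // => u hu.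
by apply: H; rewrite in_cons hu orbT.
Qed.


Lemma coef_lin_r (s : tpoly R) b r i : (forall k, 0 <= s k) ->
  hsum [seq s k * linT b (i.+1 - k)%N | k <- iota 0 i.+2] r -> hadd (s i) (s i.+1 * b) r.
Proof.
move=> hs; have -> : iota 0 i.+2 = iota 0 i ++ [:: i; i.+1] by rewrite -addn2 iotaD.
rewrite map_cat map_zero; last first.
  move=> t; rewrite mem_iota => /andP[_ ht]; rewrite /linT.
  have -> : (i.+1 - t == 0)%N = false by apply/negbTE; lia.
  have -> : (i.+1 - t == 1)%N = false by apply/negbTE; lia.
  by rewrite mulr0.
rewrite hsum_zl /= subSnn subnn /linT /= mulr1 hsum2 //.
Qed.

Lemma coef_lin_r0 (s : tpoly R) b r : 0 <= s 0%N * b ->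
  hsum [seq s k * linT b (0 - k)%N | k <- iota 0 1] r -> r = s 0%N * b.
Proof. by move=> h; rewrite /= /linT /= hsum1. Qed.

Lemma coef_lin_l (a : R) (d : tpoly R) i c : 0 <= a * d i.+1 -> 0 <= d i ->
  hadd (a * d i.+1) (d i) c -> hsum [seq linT a k * d (i.+1 - k)%N | k <- iota 0 i.+2] c.
Proof.
move=> h1 h2 H; have -> : iota 0 i.+2 = [:: 0%N; 1%N] ++ iota 2 i by rewrite -add2n iotaD.
rewrite map_cat [X in _ ++ X]map_zero; last first.
  move=> t; rewrite mem_iota => /andP[ht _]; rewrite /linT.
  have -> : (t == 0)%N = false by apply/negbTE; lia.
  have -> : (t == 1)%N = false by apply/negbTE; lia.
  by rewrite mul0r.
rewrite hsum_zr /=; last by rewrite /linT /= mul1r subn1 /= h1 h2.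
by rewrite /linT /= subn0 subn1 /= mul1r hsum2.
Qed.

Lemma coef_lin_l0 (a : R) (d : tpoly R) c : 0 <= a * d 0%N ->
  c = a * d 0%N -> hsum [seq linT a k * d (0 - k)%N | k <- iota 0 1] c.
Proof. by move=> h ->; rewrite /= /linT /= hsum1. Qed.

Definition PP (b : nat -> R) N i := \prod_(i.+1 <= j < N.+1) b j.

Lemma PP_S b N i : (i < N)%N -> PP b N i = b i.+1 * PP b N i.+1.
Proof. by move=> h; rewrite /PP big_ltn. Qed.

Lemma PP_N b N : PP b N N = 1.
Proof. by rewrite /PP big_geq. Qed.

Lemma PP_rec b N i : (i <= N)%N -> PP b N.+1 i = PP b N i * b N.+1.
Proof. by move=> h; rewrite /PP big_nat_recr. Qed.

Lemma PP_ge0 b N i : (forall j, (1 <= j <= N)%N -> 0 <= b j) -> 0 <= PP b N i.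
Proof.
move=> H; rewrite /PP big_seq; apply: prodr_ge0 => j; rewrite mem_iota => /andP[h1 h2].
apply: H; lia.
Qed.

Lemma PP_gt0 b N i : (forall j, (i.+1 <= j <= N)%N -> 0 < b j) -> 0 < PP b N i.
Proof.
move=> H; rewrite /PP big_seq; apply: prodr_gt0 => j; rewrite mem_iota => /andP[h1 h2].
apply: H; lia.
Qed.

Lemma FT (b : nat -> R) N (r : tpoly R) :
 (forall i, (1 <= i <= N)%N -> 0 <= b i) ->
 (forall i j, (1 <= i)%N -> (i <= j)%N -> (j <= N)%N -> b i <= b j) ->
 hprod [seq linT (b i) | i <- iota 1 N] r ->
 [/\ (forall i, 0 <= r i),
     (forall i, (N < i)%N -> r i = 0),
     (forall i, (i <= N)%N -> r i <= PP b N i),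
     (r 0%N = PP b N 0 /\ r N = 1) &
     (forall i, (1 <= i < N)%N -> b i < b i.+1 -> r i = PP b N i)].
Proof.
elim: N r => [|N IH] r hb hs.
  rewrite /hprod /= => Hr; rewrite {}Hr /tpoly1; split.
  - by move=> i; case: (i == 0)%N.
  - by case.
  - by case=> // _; rewrite PP_N.
  - by rewrite PP_N.
  - by case.
have -> : iota 1 N.+1 = iota 1 N ++ [:: N.+1] by move: (iotaD 1 N 1); rewrite addn1 add1n.
rewrite /hprod map_cat cats1 rev_rcons /= => -[s [Hs Hp]].
have [||s0 sz sle [s0e sN] seq] := IH s _ _ Hs.
- by move=> i hi; apply: hb; lia.
- by move=> i j h1 h2 h3; apply: hs; lia.
have bN0 : 0 <= b N.+1 by apply: hb; lia.
have r0 : r 0%N = s 0%N * b N.+1 by apply: coef_lin_r0 (Hp 0%N); rewrite mulr_ge0.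
have rS i : hadd (s i) (s i.+1 * b N.+1) (r i.+1) by apply: coef_lin_r (Hp i.+1).
have rN : r N.+1 = 1.
  by move: (rS N); rewrite sN sz // mul0r /hadd oner_eq0 /= max_l.
have PPge i : 0 <= PP b N i by apply: PP_ge0 => j hj; apply: hb; lia.
split.
- case=> [|i]; first by rewrite r0 mulr_ge0.
  by apply: hadd_ge0 (rS i) => //; rewrite mulr_ge0.
- case=> [//|i] hi; move: (rS i); rewrite !sz ?mul0r; try lia.
  exact: hadd00.
- case=> [_|i hi]; first by rewrite r0 s0e PP_rec.
  have:= hadd_le (rS i); case: (ltngtP i.+1 N.+1) => [hlt||he]; try lia.
    rewrite PP_rec; last lia.
    move=> H; apply: (le_trans H); rewrite ge_max; apply/andP; split.
      apply: (le_trans (sle i _)); first lia.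
      rewrite PP_S; last lia.
      have : b i.+1 <= b N.+1 by apply: hs; lia.
      by move: (PPge i.+1) => ?; nra.
    by apply: ler_wpM2r => //; apply: sle; lia.
  by rewrite he rN PP_N.
- by split; [rewrite r0 s0e PP_rec | exact: rN].
- case=> [//|i] /andP[_ hi] hlt.
  have si1 : s i.+1 = PP b N i.+1.
    case: (ltngtP i.+1 N) => [h||h]; try lia.
      by apply: seq => //; apply/andP; split.
    by rewrite h sN PP_N.
  have bi0 : 0 <= b i.+1 by apply: hb; lia.
  have Ppos : 0 < PP b N i.+1.
    apply: PP_gt0 => j hj; apply: (lt_le_trans (le_lt_trans bi0 hlt)); apply: hs; lia.
  rewrite (hadd_lt _ (rS i)) ?si1 ?PP_rec //; try lia.
  apply: (le_lt_trans (sle i _)); first lia.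
  rewrite PP_S; last lia.
  have : b i.+2 <= b N.+1 by apply: hs; lia.
  by move: hlt Ppos; nra.
Qed.

End Aux.

Ltac clean_ctx :=
  repeat match goal with H : ?T |- _ =>
    lazymatch T with
    | is_true (leq _ _) => fail
    | is_true (andb (leq _ _) (leq _ _)) => fail
    | (@eq nat _ _) => fail
    | _ => clear H
    end
  end.
Ltac nlia := clean_ctx; lia.

Unset Implicit Arguments.
Set Strict Implicit.

Theorem mainTheorem6 (R : realFieldType) (n : nat) (c : nat -> R)
  (rts : nat -> R) (a : R) (k m : nat) (d : nat -> R) :
  (* p = sum c_i T^i is a polynomial over T of degree n >= 1 *)
  (1 <= n)%N ->
  (forall i, 0 <= c i) ->
  c n != 0 ->
  (forall i, (n < i)%N -> c i = 0) ->
  (* a_1 <= ... <= a_n in T with c_n^{-1} p in [.]_{i=1}^n (T + a_i) *)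
  (forall i, (1 <= i <= n)%N -> 0 <= rts i) ->
  (forall i j, (1 <= i)%N -> (i <= j)%N -> (j <= n)%N -> rts i <= rts j) ->
  hprod [seq linT (rts i) | i <- iota 1 n] (fun i => (c n)^-1 * c i) ->
  (* a <> 0 occurs exactly at positions k, ..., k+m-1 *)
  a != 0 ->
  (1 <= k <= n)%N -> (1 <= m)%N -> (k + m - 1 <= n)%N ->
  (forall j, (k <= j <= k + m - 1)%N -> rts j = a) ->
  ((2 <= k)%N -> rts (k - 1)%N < rts k) ->
  ((k + m <= n)%N -> rts (k + m - 1)%N < rts (k + m)%N) ->
  (* definition of d_0, ..., d_{n-1} (and d_i = 0 for i >= n) *)
  ((k <= n - m)%N ->
     d (n - 1)%N = c n /\
     (forall i, (k + m - 1 <= i <= n - 2)%N ->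
        d i = Num.max (c i.+1) (a * d i.+1))) ->
  ((2 <= k)%N ->
     d 0%N = a^-1 * c 0%N /\
     (forall i, (1 <= i <= k - 2)%N ->
        d i = Num.max (a^-1 * c i) (a^-1 * d (i - 1)%N))) ->
  (forall i, (k - 1 <= i <= k + m - 2)%N ->
     d i = (\prod_(i.+2 <= j < n.+1) rts j) * c n) ->
  (forall i, (n <= i)%N -> d i = 0) ->
  (* conclusion: p in (T + a) [.] q, where q = sum_{i<n} d_i T^i *)
  pmul (linT a) d c /\
  (c n = d (n - 1)%N /\ c 0%N = a * d 0%N /\
   forall i, (1 <= i <= n - 1)%N -> hadd (a * d i) (d (i - 1)%N) (c i)).
Proof.
move=> n1 c0 cn0 cz rts0 rtsS hp a0 /andP[k1 kn] m1 Kn rtsA rtsk1 rtsK H1 H2 H3 dz.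
have cnp : 0 < c n by rewrite lt_def cn0 c0.
have [_ _ rle [r0e _] req] := FT rts0 rtsS hp.
have F1 i : (i <= n)%N -> c i <= PP rts n i * c n.
  move=> hi; have := rle i hi => /=.
  by rewrite mulrC -ler_pdivrMr.
have F0 : c 0%N = PP rts n 0 * c n.
  by rewrite -r0e mulrAC mulVf ?mul1r.
have Feq i : (1 <= i < n)%N -> rts i < rts i.+1 -> c i = PP rts n i * c n.
  by move=> h1 h2; rewrite -(req i h1 h2) mulrAC mulVf ?mul1r.
have ak : rts k = a by apply: rtsA; nlia.
have apos : 0 < a by rewrite lt_def a0 -ak rts0 //; nlia.
have a0' : 0 <= a by rewrite ltW.
have cn0' : 0 <= c n by rewrite ltW.
have PPge i : 0 <= PP rts n i by apply: PP_ge0.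
have R1 : (k <= n - m)%N -> forall i, (k + m - 1 <= i <= n - 1)%N ->
    0 <= d i /\ a * d i <= PP rts n i * c n.
  move=> hk; have [hd1 hrec] := H1 hk.
  suff S : forall t, (t <= n - 1 - (k + m - 1))%N ->
      0 <= d (n - 1 - t)%N /\ a * d (n - 1 - t)%N <= PP rts n (n - 1 - t) * c n.
    move=> i hi; have := S (n - 1 - i)%N.
    have -> : (n - 1 - (n - 1 - i))%N = i by nlia.
    by apply; nlia.
  elim=> [_|t IH ht].
    rewrite subn0 hd1; split => //.
    have e : (n - 1).+1 = n by nlia.
    rewrite PP_S; last nlia.
    rewrite e PP_N mulr1; apply: ler_wpM2r => //; rewrite -ak; apply: rtsS; nlia.
  have [IH1 IH2] := IH (ltnW ht).
  have e : (n - 1 - t.+1).+1 = (n - 1 - t)%N by nlia.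
  rewrite hrec; last nlia.
  rewrite e; split; first by rewrite le_max c0.
  rewrite maxr_pMr // ge_max; rewrite PP_S; last nlia.
  rewrite e.
  have hr : a <= rts (n - 1 - t)%N by rewrite -ak; apply: rtsS; nlia.
  have hc := F1 (n - 1 - t)%N (leq_trans (leq_subr _ _) (leq_subr _ _)).
  have hP := PPge (n - 1 - t)%N.
  have hQ := mulr_ge0 hP cn0'.
  have st x : x <= PP rts n (n - 1 - t) * c n ->
      a * x <= rts (n - 1 - t)%N * PP rts n (n - 1 - t) * c n.
    move=> hx; rewrite -mulrA; apply: le_trans (ler_wpM2l a0' hx) _.
    by apply: ler_wpM2r.
  by apply/andP; split; apply: st.
have R2 : (2 <= k)%N -> forall i, (i <= k - 2)%N ->
    0 <= d i /\ d i <= PP rts n i.+1 * c n.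
  move=> hk; have [hd0 hrec] := H2 hk.
  have key j x : (j < n)%N -> rts j.+1 <= a -> x <= PP rts n j * c n ->
      a^-1 * x <= PP rts n j.+1 * c n.
    move=> hj hr hx; rewrite mulrC ler_pdivrMr //; apply: (le_trans hx).
    rewrite PP_S // -mulrA [X in _ <= X]mulrC; apply: ler_wpM2r hr.
    by rewrite mulr_ge0.
  elim=> [_|i IH hi].
    rewrite hd0; split; first by apply: mulr_ge0 => //; rewrite invr_ge0 ltW.
    apply: key; first nlia.
      by rewrite -ak; apply: rtsS; nlia.
    by rewrite F0.
  have [IH1 IH2] := IH (ltnW hi).
  have e : (i.+1 - 1)%N = i by nlia.
  have hr : rts i.+2 <= a by rewrite -ak; apply: rtsS; nlia.
  rewrite hrec; last nlia.
  rewrite e; split; first by rewrite le_max mulr_ge0 ?c0 // invr_ge0 ltW.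
  rewrite ge_max; apply/andP; split; apply: key => //; try nlia.
  by apply: F1; nlia.
have dge0 i : 0 <= d i.
  case: (leqP n i) => hn; first by rewrite dz.
  case: (ltnP i (k - 1)) => h1.
    by have [] := R2 ltac:(nlia) i ltac:(nlia).
  case: (leqP i (k + m - 2)) => h2.
    by rewrite H3; [exact: mulr_ge0 (PPge _) cn0' | nlia].
  by have [] := R1 ltac:(nlia) i ltac:(nlia).
have C4 : forall i, (1 <= i <= n - 1)%N -> hadd (a * d i) (d (i - 1)%N) (c i).
  move=> i hi.
  case: (ltnP i (k - 1)) => hA.
    have [_ hrec] := H2 ltac:(nlia).
    rewrite hrec; last nlia.
    rewrite maxr_pMr // !mulrA mulfV ?mul1r //.
    exact: hadd_maxl.
  case: (ltnP (k - 1) i) => hB.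
    case: (ltnP i (k + m - 1)) => hC.
      rewrite H3; last nlia.
      rewrite (H3 (i - 1)%N); last nlia.
      have e : (i - 1).+1 = i by nlia.
      rewrite e mulrA -(rtsA i.+1); last nlia.
      rewrite -PP_S; last nlia.
      by apply: hadd_same; rewrite c0 F1 //; nlia.
    case: (ltnP (k + m - 1) i) => hD.
      have [_ hrec] := H1 ltac:(nlia).
      rewrite (hrec (i - 1)%N); last nlia.
      have e : (i - 1).+1 = i by nlia.
      rewrite e; exact: hadd_maxr.
    have ei : i = (k + m - 1)%N by nlia.
    rewrite (H3 (i - 1)%N); last nlia.
    have e : (i - 1).+1 = i by nlia.
    rewrite e (Feq i); last first.
      - rewrite ei; have -> : (k + m - 1).+1 = (k + m)%N by nlia.
        by apply: rtsK; nlia.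
      - by nlia.
    apply: hadd_eqr; first exact: mulr_ge0 (PPge _) cn0'.
    by have [] := R1 ltac:(nlia) i ltac:(nlia).
  have ei : i = (k - 1)%N by nlia.
  rewrite (H3 i); last nlia.
  have e : i.+1 = k by nlia.
  have E : a * PP rts n i.+1 = PP rts n i by rewrite [RHS]PP_S ?e ?ak //; nlia.
  rewrite mulrA E (Feq i); last first.
    - by rewrite e ei; apply: rtsk1; nlia.
    - by nlia.
  apply: hadd_eql; first exact: mulr_ge0 (PPge _) cn0'.
  have [] := R2 ltac:(nlia) (i - 1)%N ltac:(nlia).
  by have -> : (i - 1).+1 = i by nlia.
have C2 : c n = d (n - 1)%N.
  case: (leqP k (n - m)) => hk; first by have [] := H1 hk.
  rewrite H3; last nlia.
  have -> : (n - 1).+1 = n by nlia.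
  by rewrite big_geq // mul1r.
have C3 : c 0%N = a * d 0%N.
  case: (leqP 2 k) => hk.
    by have [-> _] := H2 hk; rewrite mulrA mulfV ?mul1r.
  rewrite H3; last nlia.
  rewrite F0 PP_S // mulrA (rtsA 1%N) //; nlia.
split; last by split => //; split.
case=> [|i].
  by apply: coef_lin_l0 => //; rewrite mulr_ge0.
apply: coef_lin_l; rewrite ?mulr_ge0 //.
case: (ltnP i.+1 n) => h1.
  by have := C4 i.+1 ltac:(nlia); rewrite subn1.
case: (ltnP n i.+1) => h2.
  rewrite !dz ?cz ?mulr0; try nlia.
  by apply: hadd_same; rewrite lexx.
have ei : i = (n - 1)%N by nlia.
rewrite dz ?mulr0; last nlia.
rewrite ei -C2 -ei; have -> : i.+1 = n by nlia.
by apply: hadd_eqr.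
Qed.
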